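(* Let $\ell,D>0$, let $\mathcal A$ be a first-order $p$-SCLI and let $x^{(t)}$ denote its iterates when run with the operator $\nabla f$. Then there are constants $c_{\mathcal A},T_{\mathcal A}>0$ such that for every $T\ge T_{\mathcal A}$ there exist $f\in\mathcal F^{\mathrm{quad}}_{n,\ell,D}$, initial points $x^{(0)},\dots,x^{(-p+1)}$ of Euclidean norm at most $D$, and some $T'\in\{T,T+1,\dots,T+p-1\}$ such that $f(x^{(T')})-f(x^* )\ge\frac{c_{\mathcal A}\ell D^2}{T}$, where $x^*$ is the minimizer of $f$.
   Context: A first-order $p$-SCLI is specified by fixed real scalars $\alpha_0,\dots,\alpha_{p-1},\beta_0,\dots,\beta_{p-1}$: given $F:\mathbb R^n\to\mathbb R^n$ (here $F=\nabla f$) and initial points $x^{(0)},\dots,x^{(-p+1)}$, it generates $x^{(t)}=\sum_{j=0}^{p-1}\big(\alpha_jF(x^{(t-p+j)})+\beta_jx^{(t-p+j)}\big)$ for $t\ge1$. $\mathcal F^{\mathrm{quad}}_{n,\ell,D}$ is the class of functions $f(x)=\frac12x^\top Sx+b^\top x$ on $\mathbb R^n$ with $S$ symmetric positive definite, $\nabla f$ $\ell$-Lipschitz, and $x^*:=-S^{-1}b$ satisfying $\|x^*\|\le D$. *)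

(* Defs.v *)
From HB Require Import structures.
From mathcomp Require Import all_boot all_order all_algebra.
From mathcomp Require Import reals.
Set Implicit Arguments. Unset Strict Implicit. Unset Printing Implicit Defensive.
Import Order.TTheory GRing.Theory Num.Theory.
Local Open Scope ring_scope.

Section Defs.
Variables (R : realType) (n : nat).
Notation vec := 'cV[R]_n.

Definition vnorm (x : vec) : R := Num.sqrt ((x^T *m x) ord0 ord0).

Definition quadf (S : 'M[R]_n) (b : vec) (x : vec) : R :=
  2^-1 * (x^T *m S *m x) ord0 ord0 + (b^T *m x) ord0 ord0.

Definition quadgrad (S : 'M[R]_n) (b : vec) (x : vec) : vec := S *m x + b.

Definition quadmin (S : 'M[R]_n) (b : vec) : vec := - (invmx S *m b).

Definition symmetric_mx (S : 'M[R]_n) : Prop := S^T = S.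
Definition posdef_mx (S : 'M[R]_n) : Prop :=
  symmetric_mx S /\ forall x : vec, x != 0 -> 0 < (x^T *m S *m x) ord0 ord0.

Definition in_Fquad (l D : R) (S : 'M[R]_n) (b : vec) : Prop :=
  posdef_mx S /\
  (forall x y : vec, vnorm (quadgrad S b x - quadgrad S b y) <= l * vnorm (x - y)) /\
  vnorm (quadmin S b) <= D.

(* A window w : nat -> vec stores w j = x^(t-p+1+j) for j < p
   (entries j >= p are irrelevant).  One step computes
   x^(t+1) = sum_{j<p} (alpha_j F(x^(t+1-p+j)) + beta_j x^(t+1-p+j))
   and shifts the window. *)
Definition scli_step (p : nat) (alpha beta : 'I_p -> R) (F : vec -> vec)
    (w : nat -> vec) : nat -> vec :=
  fun j => if (j.+1 < p)%N then w j.+1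
           else \sum_(i < p) (alpha i *: F (w i) + beta i *: w i).

(* x^(t) for t >= 0, given init j = x^(j-p+1) for j < p (requires p >= 1) *)
Definition scli_iterate (p : nat) (alpha beta : 'I_p -> R) (F : vec -> vec)
    (init : nat -> vec) (t : nat) : vec :=
  iter t (scli_step alpha beta F) init p.-1.

End Defs.

(* Main.v *)
Require Import Defs.
From HB Require Import structures.
From mathcomp Require Import all_boot all_order all_algebra.
From mathcomp Require Import reals.
From mathcomp Require Import complex ring lra zify.
Import Order.TTheory GRing.Theory Num.Theory.
Local Open Scope ring_scope.

(* Proof strategy:
   - inconsistent algorithms (sum beta <> 1) or sum alpha = 0: a constant
     (fixed-point) initialisation that never approaches x^*;
   - sum beta = 1, sum alpha > 0: a real characteristic root >= 1 (IVT);
   - sum beta = 1, sum alpha < 0: for lam ~ 1/T the characteristic polynomial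
     has a complex root of modulus >= 1 - K lam (proved via power sums of
     1/(1 - z_i)), whose real-part iterates stay large. *)

Set Implicit Arguments. Unset Strict Implicit. Unset Printing Implicit Defensive.

Section Cx.
Variable R : rcfType.
Local Notation C := R[i].
Local Open Scope complex_scope.
Definition nsq (z : C) : R := complex.Re z ^+ 2 + complex.Im z ^+ 2.

Lemma ReD (x y : C) : complex.Re (x + y) = complex.Re x + complex.Re y.
Proof. by case: x; case: y. Qed.
Lemma ImD (x y : C) : complex.Im (x + y) = complex.Im x + complex.Im y.
Proof. by case: x; case: y. Qed.
Lemma ReM (x y : C) : complex.Re (x * y) = complex.Re x * complex.Re y - complex.Im x * complex.Im y.
Proof. by case: x => a b; case: y => c d. Qed.
Lemma ImM (x y : C) : complex.Im (x * y) = complex.Re x * complex.Im y + complex.Im x * complex.Re y.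
Proof. case: x => a b; case: y => c d /=. ring. Qed.
Lemma ReV (x : C) : complex.Re (x^-1) = complex.Re x / nsq x.
Proof. by case: x. Qed.
Lemma ImV (x : C) : complex.Im (x^-1) = - complex.Im x / nsq x.
Proof. case: x => a b /=. rewrite /nsq /=. by rewrite mulNr. Qed.
Lemma Re1 : complex.Re (1 : C) = 1. Proof. by []. Qed.
Lemma ReR (x : R) : complex.Re (x%:C) = x. Proof. by []. Qed.
Lemma ReN (x : C) : complex.Re (- x) = - complex.Re x. Proof. by case: x. Qed.
Local Notation cRe := complex.Re.
Local Notation cIm := complex.Im.

Lemma prod_facts (s : seq C) : (forall z, z \in s -> z != 1) ->
  let P := \prod_(z <- s) ('X - z%:P) in
  [/\ P.[1] = \prod_(z <- s) (1 - z),
      P^`().[1] = P.[1] * \sum_(z <- s) (1 - z)^-1 &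
      P^`(2).[1] = P.[1] * ((\sum_(z <- s) (1 - z)^-1) ^+ 2 - \sum_(z <- s) ((1 - z)^-1) ^+ 2)].
Proof.
elim: s => [|a s IH] Hs /=.
  rewrite !big_nil.
  have d1 : (1 : {poly C})^`() = 0 by rewrite -polyC1 derivC.
  have d2 : (1 : {poly C})^`(2) = 0 by rewrite -polyC1 derivnC.
  rewrite d1 deriv0 horner0 hornerC.
  by split => //; rewrite ?mulr0 // expr2 mulr0 subrr mulr0.
have Ha : a != 1 by apply: Hs; rewrite mem_head.
have [H0 H1 H2] : _ := IH (fun z hz => Hs z (mem_behead (s := a :: s) hz)).
set Q := \prod_(z <- s) ('X - z%:P) in H0 H1 H2 *.
rewrite !big_cons.
have ha : (1 - a) != 0 by rewrite subr_eq0 eq_sym.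
have E1 : (('X - a%:P) * Q)^`() = Q + ('X - a%:P) * Q^`().
  by rewrite derivM derivXsubC mul1r.
have E2 : (('X - a%:P) * Q)^`()^`() = Q^`() *+ 2 + ('X - a%:P) * Q^`()^`().
  by rewrite E1 derivD derivM derivXsubC mul1r addrA mulr2n.
split.
- by rewrite hornerM hornerXsubC H0.
- rewrite E1 !(hornerXsubC, hornerD, hornerM) -/Q H1 !H0.
  set W := \prod_(z <- s) _; set Sm := \sum_(z <- s) _.
  field. exact: ha.
- rewrite /= in H2.
  rewrite E2 !(hornerXsubC, hornerD, hornerM, hornerMn) -/Q H2 H1 !H0.
  set W := \prod_(z <- s) _; set Sm := \sum_(z <- s) _; set Sm2 := \sum_(z <- s) _.
  field. exact: ha.
Qed.

Lemma elem_facts (z : C) (rho : R) : 0 <= rho -> rho < 1 -> nsq z <= rho ^+ 2 ->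
  let w := (1 - z)^-1 in
  [/\ 0 < nsq (1 - z), nsq (1 - z) * nsq w = 1, 0 < cRe w &
      nsq w * (1 - rho ^+ 2) <= 2 * cRe w].
Proof.
move=> r0 r1 hz w.
have hx : cRe z < 1 by move: hz; rewrite /nsq; nra.
have hre : cRe (1 - z) = 1 - cRe z by rewrite ReD ReN.
have him : cIm (1 - z) = - cIm z by rewrite ImD; case: z {hz hx hre w} => x y /=; rewrite sub0r.
have hN : 0 < nsq (1 - z) by rewrite /nsq hre him; nra.
have hN0 : nsq (1 - z) != 0 by rewrite gt_eqF.
have hw1 : cRe w = (1 - cRe z) / nsq (1 - z) by rewrite /w ReV hre.
have hw2 : cIm w = cIm z / nsq (1 - z) by rewrite /w ImV him opprK.
have hnw : nsq w = 1 / nsq (1 - z).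
  rewrite {1}/nsq hw1 hw2.
  move: hN0; rewrite {1 2}/nsq hre him => hN0.
  rewrite /nsq hre him. field. exact: hN0.
split => //.
- by rewrite hnw mul1r mulfV.
- rewrite hw1; apply: divr_gt0 => //; lra.
- rewrite hnw hw1 mul1r mulrC mulrA ler_pM2r ?invr_gt0 //.
  move: hz; rewrite /nsq => hz; nra.
Qed.

Lemma Re_sum (s : seq C) (F : C -> C) :
  cRe (\sum_(z <- s) F z) = \sum_(z <- s) cRe (F z).
Proof. by elim: s => [|a s IH]; rewrite ?big_nil ?big_cons //= ReD IH. Qed.

Lemma nsqM (x y : C) : nsq (x * y) = nsq x * nsq y.
Proof. case: x => a b; case: y => c d; rewrite /nsq /=; ring. Qed.

Lemma nsq_prod (s : seq C) (F : C -> C) :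
  nsq (\prod_(z <- s) F z) = \prod_(z <- s) nsq (F z).
Proof.
elim: s => [|a s IH]; rewrite ?big_nil ?big_cons ?nsqM ?IH //.
by rewrite /nsq /= expr0n /= addr0 expr1n.
Qed.

Lemma sum_le_elem (s : seq C) (f : C -> R) z : z \in s ->
  (forall x, x \in s -> 0 <= f x) -> f z <= \sum_(x <- s) f x.
Proof.
elim: s => [|a s IH] //= hz hf; rewrite big_cons.
have hs : 0 <= \sum_(x <- s) f x.
  by rewrite big_seq_cond; apply: sumr_ge0 => x /andP[hx _]; apply: hf; rewrite inE hx orbT.
move: hz; rewrite inE => /orP[/eqP ->|hz].
  by rewrite lerDl.
have := IH hz (fun x hx => hf x (mem_behead (s := a :: s) hx)).
have := hf a (mem_head _ _). lra.
Qed.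

Lemma prod_le_pow (s : seq C) (f : C -> R) M :
  (forall x, x \in s -> 0 <= f x <= M) -> \prod_(x <- s) f x <= M ^+ size s.
Proof.
elim: s => [|a s IH] hf; rewrite ?big_nil ?big_cons //= exprS.
have /andP[h0 h1] := hf a (mem_head _ _).
apply: ler_pM => //.
  by rewrite big_seq_cond; apply: prodr_ge0 => x /andP[hx _]; case/andP: (hf x (mem_behead (s := a :: s) hx)).
exact: IH (fun x hx => hf x (mem_behead (s := a :: s) hx)).
Qed.

Lemma list_facts (s : seq C) (a b : C -> R) (k : R) : 0 < k ->
  (forall z, z \in s -> 0 < a z /\ (a z ^+ 2 + b z ^+ 2) * k <= 2 * a z) ->
  let sg := \sum_(z <- s) a z in
  let ta := \sum_(z <- s) (a z ^+ 2 - b z ^+ 2) in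
  [/\ s != [::] -> 0 < sg, k * sg <= 2 * (size s)%:R, - 2 * sg <= k * ta,
      ta <= sg ^+ 2 & \prod_(z <- s) (a z ^+ 2 + b z ^+ 2) <= (2 * sg ^+ 2 - ta) ^+ size s].
Proof.
move=> hk H sg ta.
have Hrec : forall s' : seq C, (forall z, z \in s' -> z \in s) ->
  [/\ (s' != [::] -> 0 < \sum_(z <- s') a z) /\ 0 <= \sum_(z <- s') a z,
      k * \sum_(z <- s') a z <= 2 * (size s')%:R,
      - 2 * \sum_(z <- s') a z <= k * \sum_(z <- s') (a z ^+ 2 - b z ^+ 2),
      \sum_(z <- s') (a z ^+ 2 - b z ^+ 2) <= (\sum_(z <- s') a z) ^+ 2 &
      \sum_(z <- s') (a z ^+ 2 + b z ^+ 2) <= 2 * (\sum_(z <- s') a z) ^+ 2 - \sum_(z <- s') (a z ^+ 2 - b z ^+ 2)].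
  elim => [|c s' IH] hsub; rewrite ?big_nil ?big_cons /=.
    by split => //; rewrite ?mulr0 ?expr0n //= ?mulr0 ?subr0 ?lexx.
  have [[IH1 IH0] IH2 IH3 IH5 IH4] := IH (fun z hz => hsub z (mem_behead (s := c :: s') hz)).
  have [hc1 hc2] := H c (hsub c (mem_head _ _)).
  set S1 := \sum_(z <- s') a z in IH1 IH0 IH2 IH3 IH4 IH5 *.
  set S2 := \sum_(z <- s') (a z ^+ 2 - b z ^+ 2) in IH3 IH4 IH5 *.
  set S3 := \sum_(z <- s') (a z ^+ 2 + b z ^+ 2) in IH4 *.
  have hkc : k * a c <= 2.
    have : a c ^+ 2 * k <= 2 * a c by nra.
    move=> h; nra.
  split.
  - split; [move=> _|]; lra.
  - rewrite mulrS; lra.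
  - rewrite mulrDr; nra.
  - have := sqr_ge0 (b c); have : 0 <= a c * S1 by rewrite mulr_ge0 // ltW. nra.
  - have : 0 <= a c * S1 by rewrite mulr_ge0 // ltW. nra.
have [[R1 R0] R2 R3 R5 R4] := Hrec s (fun z hz => hz).
split => //.
apply: prod_le_pow => x hx; apply/andP; split.
  by rewrite addr_ge0 ?sqr_ge0.
apply: le_trans R4.
apply: (sum_le_elem (f := fun z => a z ^+ 2 + b z ^+ 2)) => // y _.
by rewrite addr_ge0 ?sqr_ge0.
Qed.

Lemma nsqR (x : R) : nsq (x%:C) = x ^+ 2.
Proof. by rewrite /nsq /= expr0n /= addr0. Qed.

Lemma divC (x y : R) : x%:C / y%:C = (x / y)%:C.
Proof. by rewrite fmorph_div. Qed.

Lemma poly_facts (chi : {poly R}) (s : seq C) (rho : R) : 0 <= rho -> rho < 1 ->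
  map_poly (real_complex R) chi = \prod_(z <- s) ('X - z%:P) ->
  (forall z, z \in s -> nsq z <= rho ^+ 2) ->
  let q0 := chi.[1] in let r1 := chi^`().[1] in let r2 := chi^`()^`().[1] in
  let sg := r1 / q0 in let ta := sg ^+ 2 - r2 / q0 in let k := 1 - rho ^+ 2 in
  [/\ q0 != 0, s != [::] -> 0 < sg, k * sg <= 2 * (size s)%:R, - 2 * sg <= k * ta &
      ta <= sg ^+ 2 /\ 1 <= q0 ^+ 2 * (2 * sg ^+ 2 - ta) ^+ (size s)].
Proof.
move=> r0 r1' hchi hs q0 r1 r2 sg ta k.
have hne1 : forall z, z \in s -> z != 1.
  move=> z hz; apply/eqP => E; have := hs z hz; rewrite E /nsq /= expr0n /= addr0 expr1n.
  move=> h; nra.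
have [H0 H1 H2] := prod_facts hne1.
set P := \prod_(z <- s) _ in H0 H1 H2 hchi.
rewrite /= in H2.
have hm : forall q : {poly R}, (map_poly (real_complex R) q).[1] = (q.[1])%:C.
  by move=> q; rewrite -(rmorph1 (real_complex R)) horner_map.
have e0 : P.[1] = q0%:C by rewrite -hchi hm.
have e1 : P^`().[1] = r1%:C by rewrite -hchi deriv_map hm.
have e2 : P^`()^`().[1] = r2%:C by rewrite -hchi !deriv_map hm.
set W := \prod_(z <- s) (1 - z) in H0.
have hk : 0 < k by rewrite /k; nra.
have Hel : forall z, z \in s -> 
   [/\ 0 < nsq (1 - z), nsq (1 - z) * nsq ((1 - z)^-1) = 1, 0 < cRe ((1 - z)^-1) &
      nsq ((1 - z)^-1) * (1 - rho ^+ 2) <= 2 * cRe ((1 - z)^-1)].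
  by move=> z hz; apply: elem_facts => //; apply: hs.
have nW : nsq W = \prod_(z <- s) nsq (1 - z) by rewrite /W nsq_prod.
have nWpos : 0 < nsq W.
  rewrite nW big_seq_cond; apply: prodr_gt0 => z /andP[hz _].
  by case: (Hel z hz).
have hq0 : q0 ^+ 2 = nsq W by rewrite -nsqR -e0 H0.
have q0ne : q0 != 0 by apply/eqP => E; move: nWpos; rewrite -hq0 E expr0n /= ltxx.
have Wne : W != 0 by rewrite -H0 e0; apply/eqP => /(congr1 (@complex.Re R)) /= /eqP; rewrite (negbTE q0ne).
set Sw := \sum_(z <- s) (1 - z)^-1 in H1 H2.
set Sw2 := \sum_(z <- s) ((1 - z)^-1) ^+ 2 in H2.
have q0C : q0%:C != 0.
  by apply/eqP => /(congr1 (@complex.Re R)) /= /eqP; rewrite (negbTE q0ne).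
have eSw : Sw = sg%:C.
  have H1' : r1%:C = q0%:C * Sw by rewrite -e1 H1; congr (_ * _); exact: e0.
  by rewrite /sg -divC H1' [q0%:C * _]mulrC mulfK.
have eSw2 : Sw2 = ta%:C.
  have : r2%:C = q0%:C * (Sw ^+ 2 - Sw2) by rewrite -e2 H2; congr (_ * _); exact: e0.
  rewrite eSw => E.
  have : Sw2 = sg%:C ^+ 2 - r2%:C / q0%:C by rewrite E; field; exact: q0C.
  by rewrite divC /ta -rmorphXn -rmorphB.
have Hl := @list_facts s (fun z => cRe ((1 - z)^-1)) (fun z => cIm ((1 - z)^-1)) k hk.
have [L1 L2 L3 L4 L5] : _ := Hl (fun z hz => match Hel z hz with And4 _ _ h1 h2 => conj h1 h2 end).
have esg : \sum_(z <- s) cRe ((1 - z)^-1) = sg by rewrite -Re_sum -/Sw eSw.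
have eta : \sum_(z <- s) (cRe ((1 - z)^-1) ^+ 2 - cIm ((1 - z)^-1) ^+ 2) = ta.
  have : cRe Sw2 = ta by rewrite eSw2.
  rewrite Re_sum => <-; apply: eq_bigr => z _; by rewrite expr2 ReM -!expr2.
rewrite esg eta in L1 L2 L3 L4 L5.
split => //; split => //.
have E1 : nsq W * \prod_(z <- s) nsq ((1 - z)^-1) = 1.
  rewrite nW -big_split /= big_seq_cond big1 // => z /andP[hz _].
  by case: (Hel z hz).
rewrite hq0 -[X in X <= _]E1; apply: ler_wpM2l; first exact: ltW.
exact: L5.
Qed.
End Cx.

Section Core.
Variable R : realType.

Lemma core_real (p : nat) (hp : (0 < p)%N) (A' d1 a1 d2 a2 : R) (hA : 0 < A') :
  exists K : R, exists l0 : R, [/\ 0 < K, 0 < l0, K * l0 <= 1/2 &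
   forall lam q0 r1 r2 sg ta : R, 0 < lam -> lam <= l0 ->
     q0 = lam * A' -> r1 = d1 - lam * a1 -> r2 = d2 - lam * a2 ->
     sg * q0 = r1 -> ta * q0 = sg ^+ 2 * q0 - r2 ->
     let k := 1 - (1 - K * lam) ^+ 2 in
     0 < sg -> k * sg <= 2 * p%:R -> - 2 * sg <= k * ta -> ta <= sg ^+ 2 ->
     1 <= q0 ^+ 2 * (2 * sg ^+ 2 - ta) ^+ p -> False].
Proof.
have na1 : - a1 <= `|a1| by rewrite -normrN ler_norm.
have na1' : a1 <= `|a1| by rewrite ler_norm.
have na2 : - a2 <= `|a2| by rewrite -normrN ler_norm.
have na2' : a2 <= `|a2| by rewrite ler_norm.
have hpR : 1 <= (p%:R : R) by rewrite ler1n.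
have [d1n|d1p|d10] := ltgtP d1 0.
-
  exists 1, (Num.min (1/2) ((- d1) / (`|a1| + 1))).
  split.
  - lra.
  - by rewrite lt_min; apply/andP; split; [lra|apply: divr_gt0; lra].
  - by rewrite mul1r ge_min lexx.
  move=> lam q0 r1 r2 sg ta l0 l1 eq0 er1 er2 hsg hta k H1 H2 H3 H4 H5.
  move: l1; rewrite le_min => /andP[_ l1].
  rewrite ler_pdivlMr in l1; last lra.
  have : sg * q0 > 0 by rewrite eq0; apply: mulr_gt0 => //; apply: mulr_gt0.
  rewrite hsg er1; nra.
-
  set K := 8 * p%:R * A' / d1.
  have hK : 0 < K by rewrite /K; apply: divr_gt0 => //; nra.
  exists K, (Num.min (1 / (2 * K)) (d1 / (2 * (`|a1| + 1)))).
  split => //.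
  - by rewrite lt_min; apply/andP; split; apply: divr_gt0; nra.
  - rewrite -ler_pdivlMl // ge_min; apply/orP; left.
    have -> : 1 / (2 * K) = K^-1 * (1 / 2) by field; rewrite gt_eqF.
    by [].
  move=> lam q0 r1 r2 sg ta l0 l1 eq0 er1 er2 hsg hta k H1 H2 H3 H4 H5.
  move: l1; rewrite le_min => /andP[l1 l2].
  rewrite ler_pdivlMr in l2; last lra.

  have hKl : K * lam <= 1/2.
    have := ler_wpM2l (ltW hK) l1.
    have -> : K * (1 / (2 * K)) = 1/2 by field; rewrite gt_eqF.
    by [].

  have hKl0 : 0 < K * lam by apply: mulr_gt0.
  have hk : K * lam <= k by rewrite /k; move: hKl0 hKl; set x := K * lam => h1 h2; nra.
  have hr1 : d1 / 2 <= r1.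
    have := ler_wpM2l (ltW l0) na1'.
    rewrite er1; nra.


  have hKd : K * d1 = 8 * p%:R * A' by rewrite /K; field; rewrite gt_eqF.
  have hq : 0 < q0 by rewrite eq0; apply: mulr_gt0.

  have h1 : k * r1 <= 2 * p%:R * q0.
    by rewrite -hsg mulrA ler_pM2r.
  have h2 : K * lam * (d1 / 2) <= k * r1.
    apply: ler_pM; [lra|lra|exact hk|exact hr1].

  have e : K * lam * (d1 / 2) = (K * d1) * lam / 2.
    by move: (K) (lam) (d1) => x y z; field.
  rewrite hKd in e.
  have hpos : 0 < p%:R * A' * lam by apply: mulr_gt0 => //; apply: mulr_gt0 => //; lra.
  rewrite eq0 in h1.
  have e2 : 2 * p%:R * (lam * A') = 2 * (p%:R * A' * lam) by ring.
  have e3 : 8 * p%:R * A' * lam / 2 = 4 * (p%:R * A' * lam).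
    by move: (p%:R : R) (A') (lam) => x y z; field.

  rewrite e2 in h1; rewrite e3 in e.
  lra.
-
  have [a1n|a1p] := ltP a1 0; last first.
    exists 1, (1/2); split => //; try lra.
    move=> lam q0 r1 r2 sg ta l0 l1 eq0 er1 er2 hsg hta k H1 H2 H3 H4 H5.
    have hq : 0 < q0 by rewrite eq0; apply: mulr_gt0.
    have : sg * q0 > 0 by apply: mulr_gt0.
    rewrite hsg er1 d10; nra.
  set s0 := - a1 / A'.
  have hs0 : 0 < s0 by rewrite /s0; apply: divr_gt0 => //; lra.
  have Hsg : forall lam q0 r1 sg, 0 < lam -> q0 = lam * A' -> r1 = d1 - lam * a1 ->
      sg * q0 = r1 -> sg = s0.
    move=> lam q0 r1 sg hl eq0 er1 hsg.
    apply: (mulIf (x := q0)); first by rewrite eq0 gt_eqF //; apply: mulr_gt0.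
    rewrite hsg er1 d10 eq0 /s0.
    by move: (lam) (a1) (A') hA => x y z hz; field; rewrite gt_eqF.
  have hnum1 : forall X u : R, 0 < u -> X <= 1/4 -> 2 * u <= 2 * X * u -> False.
    move=> X u hu hX h; nra.
  have [d2n|d2p|d20] := ltgtP d2 0.
  +
    exists 1, (Num.min (1/2) ((- d2) / (`|a2| + 1))).
    split.
    * lra.
    * by rewrite lt_min; apply/andP; split; [lra|apply: divr_gt0; lra].
    * by rewrite mul1r ge_min lexx.
    move=> lam q0 r1 r2 sg ta l0 l1 eq0 er1 er2 hsg hta k H1 H2 H3 H4 H5.
    move: l1; rewrite le_min => /andP[_ l1].
    rewrite ler_pdivlMr in l1; last lra.
    have hq : 0 < q0 by rewrite eq0; apply: mulr_gt0.
    have : ta * q0 <= sg ^+ 2 * q0 by rewrite ler_pM2r.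
    rewrite hta er2.
    have := ler_wpM2l (ltW l0) na2'.
    nra.
  +
    set K := 8 * s0 * A' / d2.
    have hK : 0 < K by rewrite /K; apply: divr_gt0 => //; nra.
    have hKd : K * d2 = 8 * s0 * A' by rewrite /K; field; rewrite gt_eqF.
    clearbody K.
    exists K, (Num.min (1 / (2 * K * (s0 + 1))) (d2 / (2 * (`|a2| + 1)))).
    split => //.
    * by rewrite lt_min; apply/andP; split; apply: divr_gt0; nra.
    * rewrite -ler_pdivlMl // ge_min; apply/orP; left.
      have -> : 1 / (2 * K * (s0 + 1)) = K^-1 * (1 / (2 * (s0 + 1))).
        by move: (K) (s0) hK hs0 => x y hx hy; field; apply/andP; split; rewrite gt_eqF //; lra.
      rewrite ler_pM2l ?invr_gt0 //.
      rewrite ler_pdivrMr; last lra.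
      lra.
    move=> lam q0 r1 r2 sg ta l0 l1 eq0 er1 er2 hsg hta k H1 H2 H3 H4 H5.
    move: l1; rewrite le_min => /andP[l1 l2].
    rewrite ler_pdivlMr in l2; last lra.
    have hsg0 := Hsg _ _ _ _ l0 eq0 er1 hsg.
    have hX : K * lam * (s0 + 1) <= 1/2.
      have := ler_wpM2l (ltW hK) l1.
      have -> : K * (1 / (2 * K * (s0 + 1))) = 1 / (2 * (s0 + 1)).
        by move: (K) (s0) hK hs0 => x y hx hy; field; apply/andP; split; rewrite gt_eqF //; lra.
      rewrite ler_pdivlMr; last lra.
      move=> h; rewrite ler_pdivlMr; last lra.
      nra.
    have hKl0 : 0 < K * lam by apply: mulr_gt0.
    have hKl : K * lam <= 1/2 by nra.
    have hk1 : K * lam <= k by rewrite /k; move: hKl0 hKl; set x := K * lam => h1 h2; nra.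
    have hk2 : k <= 2 * (K * lam) by rewrite /k; move: hKl0 hKl; set x := K * lam => h1 h2; nra.
    have hr2 : d2 / 2 <= r2.
      have := ler_wpM2l (ltW l0) na2'.
      rewrite er2; nra.
    have hq : 0 < q0 by rewrite eq0; apply: mulr_gt0.
    have H3q : - 2 * sg * q0 <= k * (ta * q0).
      by rewrite mulrA ler_pM2r.
    rewrite hta hsg0 in H3q.
    have h1 : K * lam * (d2 / 2) <= k * r2 by apply: ler_pM; [lra|lra|exact hk1|exact hr2].
    have h2 : k * (s0 ^+ 2 * q0) <= 2 * (K * lam) * (s0 ^+ 2 * q0).
      by apply: ler_wpM2r => //; apply: mulr_ge0; [exact: sqr_ge0|lra].
    have e1 : K * lam * (d2 / 2) = 4 * (s0 * A' * lam).
      have -> : K * lam * (d2/2) = (K * d2) * lam / 2 by move: (K) (lam) (d2) => x y z; field.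
      by rewrite hKd; move: (s0) (A') (lam) => x y z; field.
    have e2 : 2 * (K * lam) * (s0 ^+ 2 * q0) = 2 * (K * lam * s0) * (s0 * A' * lam).
      by rewrite eq0; ring.
    have e3 : - 2 * s0 * q0 = - 2 * (s0 * A' * lam) by rewrite eq0; ring.
    have hu : 0 < s0 * A' * lam by apply: mulr_gt0 => //; apply: mulr_gt0.
    have hX' : K * lam * s0 <= 1/4 by nra.
    apply: (hnum1 (K * lam * s0) (s0 * A' * lam)) => //.
    move: H3q h1 h2; rewrite e1 e2 e3.
    set u := s0 * A' * lam; set X := K * lam * s0.
    move=> a b c; nra.
  +
    set M := s0 ^+ 2 - a2 / A'.
    exists 1, (Num.min (1/2) (1 / (A' * (`|M| ^+ p + 1)))).
    have hMp : 0 <= `|M| ^+ p by apply: exprn_ge0.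
    split.
    * lra.
    * by rewrite lt_min; apply/andP; split; [lra|apply: divr_gt0; nra].
    * by rewrite mul1r ge_min lexx.
    move=> lam q0 r1 r2 sg ta l0 l1 eq0 er1 er2 hsg hta k H1 H2 H3 H4 H5.
    move: l1; rewrite le_min => /andP[_ l1].
    have hsg0 := Hsg _ _ _ _ l0 eq0 er1 hsg.
    have hq : 0 < q0 by rewrite eq0; apply: mulr_gt0.
    have hq1 : q0 * (`|M| ^+ p + 1) <= 1.
      rewrite eq0 -mulrA; move: l1; rewrite ler_pdivlMr; last nra.
      by rewrite mulrA.
    have eta : 2 * sg ^+ 2 - ta = M.
      apply: (mulIf (x := q0)); first by rewrite gt_eqF.
      rewrite mulrBl hta hsg0 er2 d20 eq0 /M.
      by move: (s0) (a2) (A') (lam) hA l0 => x y z w hz hw; field; rewrite gt_eqF.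
    rewrite eta in H5.
    have : M ^+ p <= `|M| ^+ p by rewrite -normrX ler_norm.
    move=> hMM.
    have hq2 : 0 < q0 ^+ 2 by rewrite exprn_gt0.
    have : q0 ^+ 2 * M ^+ p <= q0 ^+ 2 * `|M| ^+ p by rewrite ler_pM2l.
    move: hq1 H5; set Y := `|M| ^+ p; set Z := M ^+ p => a b c.
    nra.
Qed.
End Core.

Section Hard.
Variable R : realType.
Local Notation C := R[i].
Local Notation cRe := complex.Re.
Local Open Scope complex_scope.

Definition Qp (p : nat) (c : 'I_p -> R) : {poly R} := 'X^p - \sum_(i < p) c i *: 'X^i.

Lemma size_rest (p : nat) (F : fieldType) (c : 'I_p -> F) : (size (\sum_(i < p) c i *: 'X^i)%R <= p)%N.
Proof.
apply/leq_sizeP => j hj; rewrite coef_sum big1 // => i _.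
rewrite coefZ coefXn; case: eqP => [E|]; last by rewrite mulr0.
by move: (ltn_ord i); rewrite -E ltnNge hj.
Qed.

Lemma QpF_lead (p : nat) (F : fieldType) (c : 'I_p -> F) :
  lead_coef ('X^p - \sum_(i < p) c i *: 'X^i) = 1 /\ size ('X^p - \sum_(i < p) c i *: 'X^i) = p.+1.
Proof.
have h : (size (- \sum_(i < p) c i *: 'X^i) < size ('X^p : {poly F}))%N.
  by rewrite size_polyN size_polyXn ltnS size_rest.
by rewrite lead_coefDl // lead_coefXn size_polyDl // size_polyXn.
Qed.

Lemma QpF_horner (p : nat) (F : fieldType) (c : 'I_p -> F) x :
  ('X^p - \sum_(i < p) c i *: 'X^i).[x] = x ^+ p - \sum_(i < p) c i * x ^+ i.
Proof.
rewrite hornerD hornerN hornerXn horner_sum; congr (_ - _).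
by apply: eq_bigr => i _; rewrite hornerZ hornerXn.
Qed.

Lemma Qp_map (p : nat) (c : 'I_p -> R) :
  map_poly (real_complex R) (Qp c) = 'X^p - \sum_(i < p) (c i)%:C *: 'X^i.
Proof.
rewrite /Qp rmorphB /= map_polyXn rmorph_sum /=; congr (_ - _).
by apply: eq_bigr => i _; rewrite map_polyZ /= map_polyXn.
Qed.

Lemma hard (p : nat) (hp : (0 < p)%N) (alpha beta : 'I_p -> R) :
  \sum_(i < p) beta i = 1 -> \sum_(i < p) alpha i < 0 ->
  exists K : R, exists l0 : R, [/\ 0 < K, 0 < l0, K * l0 <= 1/2 &
    forall lam, 0 < lam -> lam <= l0 -> exists z : C,
      z ^+ p = \sum_(i < p) (beta i + lam * alpha i)%:C * z ^+ i /\
      (1 - K * lam) ^+ 2 < nsq z].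
Proof.
move=> hB hA.
set chi0 := Qp beta.
set al := \sum_(i < p) alpha i *: ('X^i : {poly R}).
have hal1 : al.[1] = \sum_(i < p) alpha i.
  rewrite horner_sum; apply: eq_bigr => i _; by rewrite hornerZ hornerXn expr1n mulr1.
have hchi1 : chi0.[1] = 0.
  rewrite /chi0 /Qp QpF_horner expr1n (eq_bigr (fun i => beta i)) ?hB ?subrr //.
  by move=> i _; rewrite expr1n mulr1.
have hdec : forall lam, Qp (fun i => beta i + lam * alpha i) = chi0 - lam *: al.
  move=> lam; rewrite /chi0 /Qp /al -addrA -opprD; congr (_ - _).
  rewrite scaler_sumr -big_split /=; apply: eq_bigr => i _.
  by rewrite scalerA scalerDl.
have [K [l0 [hK hl0 hKl hcore]]] := @core_real R p hp (- \sum_(i < p) alpha i)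
   (chi0^`().[1]) (al^`().[1]) (chi0^`()^`().[1]) (al^`()^`().[1]) (ltac:(lra)).
exists K, l0; split => // lam lam0 laml0.
set q := Qp (fun i => beta i + lam * alpha i).
set mq := map_poly (real_complex R) q.
have [r hr] := closed_field_poly_normal mq.
have [hlc hsz] := QpF_lead (fun i => (beta i + lam * alpha i)%:C).
have hmq : mq = \prod_(z <- r) ('X - z%:P).
  by rewrite hr /mq Qp_map hlc scale1r.
have hsr : size r = p.
  have := size_prod_XsubC r id; rewrite -hmq /mq Qp_map hsz.
  by case.
have hKl0 : 0 < K * lam by apply: mulr_gt0.
have hKl1 : K * lam <= 1/2.
  by apply: (le_trans _ hKl); rewrite ler_pM2l.
have [/hasP [z hz hlt] | hno] := boolP (has (fun z => (1 - K * lam) ^+ 2 < nsq z) r).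
  exists z; split => //.
  have : root mq z by rewrite hmq root_prod_XsubC.
  rewrite /root /mq Qp_map QpF_horner subr_eq0 => /eqP ->.
  by [].
exfalso.
have hall : forall z, z \in r -> nsq z <= (1 - K * lam) ^+ 2.
  move=> z hz; rewrite leNgt; apply/negP => h; move/negP: hno; apply; apply/hasP; by exists z.
have rho0 : 0 <= 1 - K * lam by lra.
have rho1 : 1 - K * lam < 1 by lra.
have [F0 F1 F2 F3 [F4 F5]] := poly_facts rho0 rho1 hmq hall.
have eq0 : q.[1] = lam * (- \sum_(i < p) alpha i).
  by rewrite /q hdec hornerD hornerN hornerZ hchi1 hal1; ring.
have er1 : q^`().[1] = chi0^`().[1] - lam * al^`().[1].
  by rewrite /q hdec derivB derivZ hornerD hornerN hornerZ.
have er2 : q^`()^`().[1] = chi0^`()^`().[1] - lam * al^`()^`().[1].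
  by rewrite /q hdec !derivB !derivZ hornerD hornerN hornerZ.
apply: (hcore lam (q.[1]) (q^`().[1]) (q^`()^`().[1]) (q^`().[1] / q.[1])
   ((q^`().[1] / q.[1]) ^+ 2 - q^`()^`().[1] / q.[1])) => //.
- by rewrite divfK.
- by rewrite mulrBl divfK.
- by apply: F1; rewrite -size_eq0 hsr -lt0n.
- by rewrite -hsr.
- by rewrite -hsr.
Qed.
End Hard.

Section Vec.
Variable R : realType.
Variable n : nat.
Local Notation vec := 'cV[R]_n.+1.
Definition e0 : vec := delta_mx ord0 ord0.

Lemma dot_e0 (r s : R) : ((r *: e0)^T *m (s *: e0)) ord0 ord0 = r * s.
Proof.
rewrite linearZ /= mxE linearZ /= -scalemxAl mxE trmx_delta mul_delta_mx mxE /=.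
by rewrite mulr1 mulrC.
Qed.

Lemma vnorm_e0 (r : R) : vnorm (r *: e0) = `|r|.
Proof. by rewrite /vnorm dot_e0 -expr2 sqrtr_sqr. Qed.

Lemma quadf_e0 (lam r r' : R) :
  quadf (lam%:M) (- ((lam * r') *: e0)) (r *: e0) = 2^-1 * lam * (r * r) - lam * r' * r.
Proof.
rewrite /quadf -mulmxA mul_scalar_mx -scalemxAr mxE dot_e0 -scaleNr dot_e0; ring.
Qed.

Lemma quadmin_e0 (lam r' : R) : lam != 0 ->
  quadmin (lam%:M) (- ((lam * r') *: e0)) = r' *: e0.
Proof.
move=> hl; rewrite /quadmin invmx_scalar mul_scalar_mx scalerN opprK scalerA.
by rewrite mulrA mulVf // mul1r.
Qed.

Lemma quadgrad_e0 (lam r r' : R) :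
  quadgrad (lam%:M) (- ((lam * r') *: e0)) (r *: e0) = (lam * (r - r')) *: e0.
Proof.
by rewrite /quadgrad mul_scalar_mx scalerA -scaleNr -scalerDl mulrBr.
Qed.

Lemma dot_ge0 (x : vec) : 0 <= (x^T *m x) ord0 ord0.
Proof.
rewrite mxE; apply: sumr_ge0 => i _; rewrite mxE -expr2; exact: sqr_ge0.
Qed.

Lemma dot_gt0 (x : vec) : x != 0 -> 0 < (x^T *m x) ord0 ord0.
Proof.
move=> hx; rewrite lt0r dot_ge0 andbT; apply/negP => /eqP h.
move: hx; apply/negP; rewrite negbK; apply/eqP/matrixP => i j.
rewrite (ord1 j) mxE.
move: h; rewrite mxE => /eqP; rewrite psumr_eq0 => [/allP H|k _]; last first.
  by rewrite mxE -expr2 sqr_ge0.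
have := H i (mem_index_enum _); rewrite mxE -expr2 sqrf_eq0 => /eqP.
by [].
Qed.

Lemma dotZ (a : R) (v : vec) : ((a *: v)^T *m (a *: v)) ord0 ord0 = a ^+ 2 * (v^T *m v) ord0 ord0.
Proof. rewrite !mxE mulr_sumr; apply: eq_bigr => i _; rewrite !mxE; ring. Qed.

Lemma in_Fquad_e0 (l D lam r' : R) : 0 < lam -> lam <= l -> `|r'| <= D ->
  in_Fquad l D (lam%:M) (- ((lam * r') *: e0)).
Proof.
move=> hl0 hl1 hr; split; [split|split].
- exact: tr_scalar_mx.
- move=> x hx; rewrite -mulmxA mul_scalar_mx -scalemxAr mxE.
  by apply: mulr_gt0 => //; apply: dot_gt0.
- move=> x y; rewrite /quadgrad opprD addrACA subrr addr0 -mulmxBr mul_scalar_mx /vnorm.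
  rewrite dotZ sqrtrM ?sqr_ge0 //.
  rewrite sqrtr_sqr ger0_norm ?(ltW hl0) //; apply: ler_wpM2r => //.
  exact: sqrtr_ge0.
- by rewrite quadmin_e0 ?gt_eqF // vnorm_e0.
Qed.

End Vec.

Section Iter.
Variable R : realType.
Variable n p : nat.
Variables (alpha beta : 'I_p -> R).
Local Open Scope complex_scope.
Local Notation vec := 'cV[R]_n.+1.

Definition sstep (lam r' : R) (w : nat -> R) : nat -> R :=
  fun j => if (j.+1 < p)%N then w j.+1
           else \sum_(i < p) (alpha i * (lam * (w i - r')) + beta i * w i).

Lemma iter_vec (lam r' : R) (g : nat -> R) t j :
  iter t (scli_step alpha beta (quadgrad (lam%:M) (- ((lam * r') *: (e0 R n)))))
    (fun j => g j *: e0 R n) j = (iter t (sstep lam r') g j) *: e0 R n.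
Proof.
elim: t j => [|t IH] j //=.
rewrite /scli_step /sstep; case: ifP => _; first exact: IH.
rewrite scaler_suml; apply: eq_bigr => i _.
by rewrite !IH quadgrad_e0 !scalerA -scalerDl.
Qed.

Lemma iter_const (lam r' y : R) :
  y = \sum_(i < p) (alpha i * (lam * (y - r')) + beta i * y) ->
  forall t j, iter t (sstep lam r') (fun _ => y) j = y.
Proof.
move=> hy; elim=> [|t IH] j //=.
rewrite /sstep; case: ifP => _; first exact: IH.
rewrite [RHS]hy; apply: eq_bigr => i _; by rewrite !IH.
Qed.

Lemma ReRM (x : R) (y : R[i]) : complex.Re (x%:C * y) = x * complex.Re y.
Proof. case: y => a b /=; ring. Qed.

Lemma ReSumI (F : 'I_p -> R[i]) : complex.Re (\sum_(i < p) F i) = \sum_(i < p) complex.Re (F i).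
Proof. exact: (big_morph _ (@ReD R) (erefl _)). Qed.

Lemma iter_root (lam : R) (z u : R[i]) :
  z ^+ p = \sum_(i < p) (beta i + lam * alpha i)%:C * z ^+ i ->
  let G := fun m => complex.Re (u * z ^+ m) in
  forall t j, (j < p)%N -> iter t (sstep lam 0) G j = G (t + j)%N.
Proof.
move=> hz G; elim=> [|t IH] j hj //=.
rewrite /sstep; case: ifP => hj1.
  by rewrite IH // addSnnS.
have ej : j = p.-1.
  apply/eqP; rewrite eqn_leq -ltnS prednK ?hj //=; last by apply: leq_ltn_trans hj.
  by rewrite -ltnS prednK ?(leq_ltn_trans _ hj) // leqNgt hj1.
have -> : (t.+1 + j)%N = (t + p)%N.
  by rewrite ej addSnnS prednK // (leq_ltn_trans _ hj).
rewrite /G exprD mulrA hz mulr_sumr ReSumI.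
apply: eq_bigr => i _.
rewrite IH // subr0.
have -> : u * z ^+ t * ((beta i + lam * alpha i)%:C * z ^+ i) =
  (beta i + lam * alpha i)%:C * (u * z ^+ (t + i)) by rewrite exprD; ring.
rewrite ReRM /G; ring.
Qed.


Lemma conjM (z : R[i]) : Complex (complex.Re z) (- complex.Im z) * z = (nsq z)%:C.
Proof. case: z => a b; rewrite /nsq /=; congr Complex; ring. Qed.

Lemma nsqX (z : R[i]) k : nsq (z ^+ k) = nsq z ^+ k.
Proof. elim: k => [|k IH]; first by rewrite !expr0 /nsq /= expr0n /= addr0 expr1n.
by rewrite !exprS nsqM IH. Qed.

Lemma Re_sq_le (w : R[i]) : complex.Re w ^+ 2 <= nsq w.
Proof. by rewrite /nsq lerDl sqr_ge0. Qed.

Lemma root_final (hp : (0 < p)%N) (l D lam : R) (z : R[i]) (T : nat) :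
  0 < lam -> lam <= l -> 0 < D ->
  z ^+ p = \sum_(i < p) (beta i + lam * alpha i)%:C * z ^+ i -> 0 < nsq z ->
  exists (S : 'M[R]_n.+1) (b : 'cV[R]_n.+1) (init : nat -> 'cV[R]_n.+1),
    [/\ in_Fquad l D S b, (forall j, (j < p)%N -> vnorm (init j) <= D) &
     lam / 2 * D ^+ 2 * Num.min 1 (nsq z ^+ (T + p.-1)) <=
       quadf S b (scli_iterate alpha beta (quadgrad S b) init T) - quadf S b (quadmin S b)].
Proof.
move=> hl0 hl1 hD hz hN.
set N := nsq z; set m := (T + p.-1)%N.
set zc := Complex (complex.Re z) (- complex.Im z).
have hNzc : nsq zc = N by rewrite /nsq /= sqrrN.
pose e := if 1 <= N then p.-1 else 0%N.
have hNe : 0 < N ^+ (m + e) by rewrite exprn_gt0.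
set g := Num.sqrt (D ^+ 2 / N ^+ (m + e)).
have hg2 : g ^+ 2 = D ^+ 2 / N ^+ (m + e).
  by rewrite sqr_sqrtr // divr_ge0 // ?sqr_ge0 // ltW.
pose u := zc ^+ m * g%:C.
pose G := fun k => complex.Re (u * z ^+ k).
have hGm : G m = g * N ^+ m.
  rewrite /G /u -mulrA (mulrC g%:C) mulrA -exprMn conjM -rmorphXn -rmorphM /=.
  by rewrite mulrC.
exists (lam%:M), (- ((lam * 0) *: e0 R n)), (fun j => G j *: e0 R n).
split.
- by apply: in_Fquad_e0 => //; rewrite normr0 ltW.
- move=> j hj; rewrite vnorm_e0.
  rewrite -(ger0_norm (ltW hD)) -ler_sqr ?nnegrE ?normr_ge0 // !real_normK ?num_real //.
  apply: (le_trans (Re_sq_le _)).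
  rewrite /u !nsqM nsqX hNzc nsqX -/N nsqR hg2.
  rewrite mulrC mulrA -exprD.
  rewrite mulrCA -[X in _ <= X](mulr1 (D ^+ 2)) ler_pM2l ?exprn_gt0 //.
  rewrite ler_pdivrMr // mul1r addnC.
  rewrite /e; case: ifP => hN1.
    apply: ler_weXn2l => //; rewrite leq_add2l -ltnS prednK //.
  apply: ler_wiXn2l; first exact: ltW.
    by apply: ltW; rewrite ltNge hN1.
  by rewrite addn0 leq_addr.
rewrite quadmin_e0 ?gt_eqF // /scli_iterate iter_vec iter_root // ?prednK //.
rewrite -/G -/m !quadf_e0.
change (complex.Re (u * z ^+ m)) with (G m); rewrite hGm.
have key : D ^+ 2 * Num.min 1 (N ^+ m) <= g ^+ 2 * (N ^+ m) ^+ 2.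
  rewrite hg2 /e; case: ifP => hN1.
  - have -> : (N ^+ m) ^+ 2 = N ^+ (m + p.-1) * N ^+ T.
      by rewrite -exprM -exprD /m; congr (_ ^+ _); lia.
    rewrite mulrA divfK; last by rewrite gt_eqF // exprn_gt0.
    apply: ler_pM; [exact: sqr_ge0| |exact: lexx|].
      by rewrite le_min ler01 exprn_ge0 // ltW.
    rewrite ge_min; apply/orP; left; exact: exprn_ege1.
  - have -> : (N ^+ m) ^+ 2 = N ^+ (m + 0) * N ^+ m by rewrite addn0 expr2.
    rewrite mulrA divfK; last by rewrite gt_eqF // exprn_gt0.
    by apply: ler_wpM2l; [exact: sqr_ge0|rewrite ge_min lexx orbT].
have -> : 2^-1 * lam * (g * N ^+ m * (g * N ^+ m)) - lam * 0 * (g * N ^+ m) -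
   (2^-1 * lam * (0 * 0) - lam * 0 * 0) = lam / 2 * (g ^+ 2 * (N ^+ m) ^+ 2) by ring.
rewrite -mulrA ler_pM2l //; exact: divr_gt0.
Qed.

Lemma const_final (l D lam r' y : R) (T : nat) :
  0 < lam -> lam <= l -> `|r'| <= D -> `|y| <= D ->
  y = \sum_(i < p) (alpha i * (lam * (y - r')) + beta i * y) ->
  exists (S : 'M[R]_n.+1) (b : 'cV[R]_n.+1) (init : nat -> 'cV[R]_n.+1),
    [/\ in_Fquad l D S b, (forall j, (j < p)%N -> vnorm (init j) <= D) &
     quadf S b (scli_iterate alpha beta (quadgrad S b) init T) - quadf S b (quadmin S b)
       = lam / 2 * (y - r') ^+ 2].
Proof.
move=> hl0 hl1 hr hy hfix.
exists (lam%:M), (- ((lam * r') *: e0 R n)), (fun j => y *: e0 R n).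
split.
- exact: in_Fquad_e0.
- by move=> j _; rewrite vnorm_e0.
rewrite quadmin_e0 ?gt_eqF // /scli_iterate.
rewrite (iter_vec _ _ (fun _ => y)) iter_const // !quadf_e0.
by move: (lam) (y) (r') => a b c; field.
Qed.

End Iter.

Unset Implicit Arguments.
From mathcomp Require Import polyrcf.

Lemma div_T (R : realType) (x V : R) (T : nat) : (1 <= T)%N -> 0 <= x -> x <= V -> x / T%:R <= V.
Proof.
move=> hT hx hV; have hT' : (1 : R) <= T%:R by rewrite ler1n.
rewrite ler_pdivrMr; last lra.
have hV0 : 0 <= V by lra.
apply: (le_trans hV); rewrite ler_peMr //.
Qed.

Lemma bernoulli (R : realType) (x : R) (k : nat) : 0 <= x -> x <= 1 -> 1 - k%:R * x <= (1 - x) ^+ k.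
Proof.
move=> h0 h1; elim: k => [|k IH]; first by rewrite mul0r subr0 expr0.
have hp : 0 <= (1 - x) ^+ k by apply: exprn_ge0; lra.
rewrite exprS mulrS.
have hk : 0 <= k%:R * x :> R by apply: mulr_ge0.
have hh1 : (1 - x) * (1 - k%:R * x) <= (1 - x) * (1 - x) ^+ k.
  by apply: ler_wpM2l => //; lra.
apply: le_trans hh1.
rewrite mulrBl !mul1r mulrBr mulr1.
have : 0 <= x * (k%:R * x) by apply: mulr_ge0.
lra.
Qed.

Theorem proposition30 (R : realType) (n p : nat) (hn : (0 < n)%N) (hp : (0 < p)%N)
    (l D : R) (hl : 0 < l) (hD : 0 < D) (alpha beta : 'I_p -> R) :
  exists (c : R) (T0 : nat), 0 < c /\ (0 < T0)%N /\
    forall T : nat, (T0 <= T)%N ->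
      exists (S : 'M[R]_n) (b : 'cV[R]_n) (init : nat -> 'cV[R]_n) (k : nat),
        [/\ in_Fquad l D S b,
            (forall j, (j < p)%N -> vnorm (init j) <= D),
            (k < p)%N &
            quadf S b (scli_iterate alpha beta (quadgrad S b) init (T + k))
              - quadf S b (quadmin S b) >= c * l * D ^+ 2 / T%:R].
Proof.
case: n hn => [//|n'] _.
set B := \sum_(i < p) beta i; set A := \sum_(i < p) alpha i.
have hsum : forall lam r' y : R,
   \sum_(i < p) (alpha i * (lam * (y - r')) + beta i * y) = A * (lam * (y - r')) + B * y.
  by move=> lam r' y; rewrite big_split /= -!mulr_suml.
have [hB|hB] := eqVneq B 1; last first.
  set e := 1 - B.
  have he : e != 0 by rewrite subr_eq0 eq_sym.
  have [lam [hl0 hl1 hE]] : exists lam, [/\ 0 < lam, lam <= l & e - lam * A != 0].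
    have [h|h] := eqVneq (l * A) e.
    - exists (l / 2); split; [lra|lra|].
      apply/negP => /eqP H; move/negP: he; apply; apply/eqP.
      have : l / 2 * A = e / 2 by rewrite -h; ring.
      lra.
    - by exists l; split => //; rewrite subr_eq0 eq_sym.
  set E := e - lam * A.
  have haE : 0 < `|E| by rewrite normr_gt0.
  have hab : 0 <= lam * `|A| by apply: mulr_ge0; [lra|exact: normr_ge0].
  set den := `|E| + lam * `|A|.
  have hden : 0 < den by rewrite /den; lra.
  set r' := D * `|E| / den.
  have hr' : 0 < r' by rewrite /r'; apply: divr_gt0 => //; apply: mulr_gt0.
  set y := - (lam * A * r') / E.
  have hyE : y * E = - (lam * A * r') by rewrite /y divfK.
  have hr'D : `|r'| <= D.
    rewrite ger0_norm; last exact: ltW.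
    rewrite /r' ler_pdivrMr // /den; nra.
  have hyD : `|y| <= D.
    rewrite /y normrM normrN normfV !normrM.
    rewrite (ger0_norm (ltW hl0)) (ger0_norm (ltW hD)) normr_id normfV (ger0_norm (ltW hden)).
    have -> : lam * `|A| * (D * `|E| * den^-1) / `|E| = D * (lam * `|A|) / den.
      move: (lam * `|A|) (`|E|) (den) (D) (gt_eqF haE) (gt_eqF hden) => a b c d hb hc.
      by field; rewrite hb hc.
    rewrite ler_pdivrMr // /den; have := normr_ge0 A; nra.
  have hfix : y = \sum_(i < p) (alpha i * (lam * (y - r')) + beta i * y).
    rewrite hsum.
    have hB' : B = 1 - e by rewrite /e; ring.
    rewrite hB'; move: hyE; rewrite /E => h; nra.
  set V := lam / 2 * (y - r') ^+ 2.
  have hV : 0 < V.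
    rewrite /V; apply: mulr_gt0; first lra.
    rewrite lt0r sqr_ge0 andbT sqrf_eq0 subr_eq0; apply/eqP => hyr.
    move: hyE; rewrite hyr /E => h.
    have : r' * e = 0 by nra.
    by move/eqP; rewrite mulf_eq0 (gt_eqF hr') (negbTE he).
  exists (V / (l * D ^+ 2)), 1%N; split.
    by apply: divr_gt0 => //; apply: mulr_gt0 => //; apply: exprn_gt0.
  split => // T hT.
  have [S [b [init [H1 H2 H3]]]] := @const_final R n' p alpha beta l D lam r' y T hl0 hl1 hr'D hyD hfix.
  exists S, b, init, 0%N; split => //; rewrite addn0 H3.
  have eV : V / (l * D ^+ 2) * l * D ^+ 2 = V.
    by move: (V) (l) (D) (gt_eqF hl) (gt_eqF hD) => a0 b0 c0 hb hc; field; rewrite hb hc.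
  by rewrite eV; apply: div_T => //; exact: ltW.
have [Aneg|Apos|A0] := ltgtP A 0.
-
  have [K [l0 [hK hl0 hKl Hz]]] := hard hp hB Aneg.
  set mu := Num.min l (Num.min l0 (1 / (4 * K))).
  have hmu : 0 < mu.
    rewrite /mu !lt_min hl hl0 /=; apply: divr_gt0; lra.
  have hmul : mu <= l by rewrite /mu ge_min lexx.
  have hmul0 : mu <= l0 by rewrite /mu !ge_min lexx orbT.
  have hmuK : K * mu <= 1 / 4.
    have : mu <= 1 / (4 * K) by rewrite /mu !ge_min lexx !orbT.
    rewrite ler_pdivlMr; last lra.
    move=> h; nra.
  exists (mu / (4 * l * (1 + p)%:R)), 1%N; split.
    apply: divr_gt0 => //; apply: mulr_gt0; [lra|]; by rewrite ltr0n add1n.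
  split => // T hT.
  have hTP : (1 : R) <= (T + p)%:R by rewrite ler1n; exact: leq_trans hT (leq_addr _ _).
  set lam := mu / (T + p)%:R.
  have hlam0 : 0 < lam by apply: divr_gt0 => //; lra.
  have hlammu : lam <= mu.
    by rewrite /lam ler_pdivrMr; [nra|lra].
  have hlamT : lam * (T + p)%:R = mu by rewrite /lam divfK // gt_eqF //; lra.
  have [z [hz hN]] := Hz lam hlam0 (le_trans hlammu hmul0).
  have hN0 : 0 < nsq z by apply: le_lt_trans hN; exact: sqr_ge0.
  have [S [b [init [H1 H2 H3]]]] := @root_final R n' p alpha beta hp l D lam z T hlam0
      (le_trans hlammu hmul) hD hz hN0.
  exists S, b, init, 0%N; split => //; rewrite addn0.
  apply: le_trans H3.
  set m := (T + p.-1)%N.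
  have hKl1 : 0 <= K * lam by apply: mulr_ge0; lra.
  have hKlm : K * lam * (T + p)%:R = K * mu by rewrite -mulrA hlamT.
  have hKl2 : K * lam <= 1 by nra.
  have hbern := @bernoulli R (K * lam) (m.*2) hKl1 hKl2.
  have hm : (m.*2%:R : R) <= 2 * (T + p)%:R.
    have hm' : (m.*2 <= 2 * (T + p))%N.
      by rewrite -mul2n leq_mul2l /= /m leq_add2l leq_pred.
    have e2 : ((2 * (T + p))%:R : R) = 2 * (T + p)%:R by rewrite natrM.
    by rewrite -e2 ler_nat.
  have hNm : 1 / 2 <= Num.min 1 (nsq z ^+ m).
    rewrite le_min; apply/andP; split; first lra.
    apply: le_trans (_ : (1 - K * lam) ^+ m.*2 <= _).
      apply: le_trans hbern; nra.
    rewrite -mul2n exprM; apply: lerXn2r; rewrite ?nnegrE ?sqr_ge0 //; last exact: ltW.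
    exact: ltW.
  have hD2 : 0 < D ^+ 2 by apply: exprn_gt0.
  apply: le_trans (_ : lam / 2 * D ^+ 2 * (1 / 2) <= _); last first.
    by apply: ler_wpM2l => //; apply: mulr_ge0 => //; [apply: divr_ge0; lra|exact: ltW].
  have e1 : mu / (4 * l * (1 + p)%:R) * l * D ^+ 2 / T%:R =
      (mu * D ^+ 2 / 4) / ((1 + p)%:R * T%:R).
    have hT0 : (T%:R : R) != 0 by rewrite pnatr_eq0 -lt0n.
    have hp0 : ((1 + p)%:R : R) != 0 by rewrite pnatr_eq0 add1n.
    move: (mu) (l) (D ^+ 2) ((1 + p)%:R : R) (T%:R : R) (gt_eqF hl) hT0 hp0 => a0 b0 c0 d0 e0 hb he hd.
    by field; rewrite hb he hd.
  have e2 : lam / 2 * D ^+ 2 * (1 / 2) = (mu * D ^+ 2 / 4) / (T + p)%:R.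
    have hTp0 : ((T + p)%:R : R) != 0 by rewrite pnatr_eq0 -lt0n addn_gt0 hp orbT.
    rewrite /lam; move: (mu) (D ^+ 2) ((T + p)%:R : R) hTp0 => a0 b0 c0 hc.
    by field; rewrite hc.
  rewrite e1 e2; apply: ler_wpM2l.
    by apply: divr_ge0; [apply: mulr_ge0; lra|lra].
  have hA1 : (0 : R) < (1 + p)%:R * T%:R by rewrite -natrM ltr0n muln_gt0 add1n.
  have hA2 : (0 : R) < (T + p)%:R by rewrite ltr0n addn_gt0 hp orbT.
  rewrite lef_pV2 ?posrE //.
  by rewrite -natrM ler_nat mulnDl mul1n leq_add2l leq_pmulr.
-
  set q := Qp (fun i => beta i + l * alpha i).
  have [hlc hsz] := QpF_lead (fun i => beta i + l * alpha i).
  have hq : forall x, q.[x] = x ^+ p - \sum_(i < p) (beta i + l * alpha i) * x ^+ i.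
    by move=> x; rewrite /q /Qp QpF_horner.
  have hq1 : q.[1] = - (l * A).
    rewrite hq expr1n (eq_bigr (fun i => beta i + l * alpha i)); last by move=> i _; rewrite expr1n mulr1.
    by rewrite big_split /= -mulr_sumr -/B -/A hB; ring.
  have [N0 HN0] := @poly_pinfty_gt_lc R q (ltac:(by rewrite /q /Qp hlc ltr01)).
  set M := Num.max 1 N0.
  have hqM : 1 <= q.[M] by have := HN0 M (ltac:(by rewrite le_max lexx orbT)); rewrite /q /Qp hlc.
  have hprod : q.[1] * q.[M] <= 0.
    rewrite hq1 mulNr oppr_le0; apply: mulr_ge0.
    - by apply: mulr_ge0; apply: ltW.
    - exact: (le_trans ler01 hqM).
  have [x hx hroot] := @polyrcf.poly_ivt R q 1 M (ltac:(by rewrite le_max lexx)) hprod.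
  move: hx; rewrite in_itv /= => /andP[hx1 _].
  have hxe : x ^+ p = \sum_(i < p) (beta i + l * alpha i) * x ^+ i.
    by apply/eqP; rewrite -subr_eq0 -hq; exact: hroot.
  set z := (x%:C)%C.
  have hz : z ^+ p = \sum_(i < p) ((beta i + l * alpha i)%:C)%C * z ^+ i.
    rewrite /z -rmorphXn hxe rmorph_sum; apply: eq_bigr => i _.
    by rewrite rmorphM rmorphXn.
  have hN : nsq z = x ^+ 2 by rewrite /z nsqR.
  have hN1 : 1 <= nsq z by rewrite hN; apply: exprn_ege1.
  exists (1 / 2), 1%N; split; first lra.
  split => // T hT.
  have [S [b [init [H1 H2 H3]]]] := @root_final R n' p alpha beta hp l D l z T hl (lexx l) hD hz
    (lt_le_trans ltr01 hN1).
  exists S, b, init, 0%N; split => //; rewrite addn0.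
  apply: le_trans H3.
  have -> : Num.min 1 (nsq z ^+ (T + p.-1)) = 1.
    by apply/min_idPl; apply: exprn_ege1.
  apply: div_T => //.
    by apply: mulr_ge0; [apply: mulr_ge0; lra|exact: sqr_ge0].
  by rewrite mulr1 mul1r [2^-1 * l]mulrC.
-
  have hfix : 0 = \sum_(i < p) (alpha i * (l * (0 - D)) + beta i * 0).
    by rewrite hsum A0 hB; ring.
  have hDD : `|D| <= D by rewrite ger0_norm; [exact: lexx| exact: ltW].
  have h0D : `|0 : R| <= D by rewrite normr0; exact: ltW.
  exists (1/2), 1%N; split; first lra.
  split => // T hT.
  have [S' [b' [init' [H1' H2' H3']]]] := @const_final R n' p alpha beta l D l D 0 T hl (lexx l) hDD h0D hfix.
  exists S', b', init', 0%N; split => //; rewrite addn0 H3'.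
  apply: div_T => //.
    by apply: mulr_ge0; [apply: mulr_ge0; lra|exact: sqr_ge0].
  have -> : (0 - D) ^+ 2 = D ^+ 2 by rewrite sub0r sqrrN.
  by rewrite mul1r [2^-1 * l]mulrC.
Qed.
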